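(* Let $(X,\tau,\mathcal{I})$ be an ideal topological space such that $(X,\tau)$ is semi-Alexandroff, $(X,\tau,\mathcal{I})$ is a $T_{\mathcal{I}}$-space, and $\mathcal{I}$ is a $\tau$-boundary. If $(X,\tau)$ is resolvable, then $(X,\tau,\mathcal{I})$ is $\mathcal{I}$-resolvable.
   Context: An ideal on a topological space $(X,\tau)$ is a nonempty collection $\mathcal{I}$ of subsets of $X$ closed under taking subsets and finite unions. $(X,\tau,\mathcal{I})$ is a $T_{\mathcal{I}}$-space if for every $I\in\mathcal{I}$ and every $x\in X\setminus I$ there is a set $A_x$ with $x\in A_x$, $A_x\cap I=\emptyset$, and $A_x$ open or closed. A set is semi-open if it lies between an open set and that open set's closure; $(X,\tau)$ is semi-Alexandroff if every intersection of open sets is semi-open. $\mathcal{I}$ is a $\tau$-boundary if $\tau\cap\mathcal{I}=\{\emptyset\}$. For $A\subseteq X$, the local function is $A^*=\{x\in X: U\cap A\notin\mathcal{I}\text{ for every open }U\ni x\}$; $A$ is $\mathcal{I}$-dense if $A^*=X$. A nonempty space is resolvable if $X$ is the disjoint union of two dense subsets, and $(X,\tau,\mathcal{I})$ is $\mathcal{I}$-resolvable if $X$ is the disjoint union of two $\mathcal{I}$-dense subsets. *)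

(* Defs.v *)
From mathcomp Require Import all_boot all_order.
From mathcomp Require Import boolp classical_sets topology.
Set Implicit Arguments. Unset Strict Implicit. Unset Printing Implicit Defensive.
Local Open Scope classical_set_scope.

Section IdealTop.
Context {X : topologicalType}.

Definition is_ideal (I : set (set X)) : Prop :=
  [/\ I !=set0,
      (forall A B, B `<=` A -> I A -> I B) &
      (forall A B, I A -> I B -> I (A `|` B))].

Definition semi_open (A : set X) : Prop :=
  exists U, [/\ open U, U `<=` A & A `<=` closure U].

Definition semi_Alexandroff : Prop :=
  forall F : set (set X), (forall U, F U -> open U) ->
    semi_open (\bigcap_(U in F) U).

Definition T_I_space (I : set (set X)) : Prop :=
  forall J, I J -> forall x, ~ J x ->
    exists A, [/\ A x, A `&` J = set0 & (open A \/ closed A)].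

Definition tau_boundary (I : set (set X)) : Prop :=
  [set U | open U /\ I U] = [set set0].

Definition local_fun (I : set (set X)) (A : set X) : set X :=
  [set x | forall U, open U -> U x -> ~ I (U `&` A)].

Definition I_dense (I : set (set X)) (A : set X) : Prop :=
  local_fun I A = setT.

Definition resolvable : Prop :=
  [set: X] !=set0 /\
  exists A B : set X, [/\ A `&` B = set0, A `|` B = setT, dense A & dense B].

Definition I_resolvable (I : set (set X)) : Prop :=
  exists A B : set X,
    [/\ A `&` B = set0, A `|` B = setT, I_dense I A & I_dense I B].

End IdealTop.

(* Main.v *)
Require Import Defs.
From mathcomp Require Import all_boot all_order.
From mathcomp Require Import boolp classical_sets topology.
Local Open Scope classical_set_scope.

Lemma dense_Idense (X : topologicalType) (I : set (set X)) (A : set X) :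
  is_ideal I -> semi_Alexandroff (X:=X) -> T_I_space I -> tau_boundary I ->
  dense A -> I_dense I A.
Proof.
move=> [_ Isub _] hSA hTI htb dA.
rewrite /I_dense; apply/seteqP; split => // x _ V oV Vx IJ.
pose J := V `&` A.
pose F := [set U : set X | open U /\ J `<=` U].
have KJ : \bigcap_(U in F) U `<=` J.
  move=> y Ky; apply: contrapT => nJy.
  have [B [By BJ [oB|cB]]] := hTI J IJ y nJy.
  - have Vy : V y.
      apply: Ky; split => //; by move=> z [].
    have [z [[Vz Bz] Az]] : (V `&` B) `&` A !=set0.
      apply: dA; [by exists y | exact: openI].
    have : (B `&` J) z by split => //; split.
    by rewrite BJ.
  - have : (~` B) y.
      apply: Ky; split; first exact: closed_openC.
      move=> z Jz Bz; have : (B `&` J) z by split.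
      by rewrite BJ.
    by apply.
have [U [oU UK KU]] := hSA F (fun U FU => FU.1).
have IU : I U by apply: (Isub J) => // z /UK /KJ.
have U0 : U = set0.
  have : [set U | open U /\ I U] U by split.
  by rewrite htb.
have J0 : J `<=` set0.
  move=> z Jz; rewrite -closure0 -U0; apply: KU => W [oW JW]; exact: JW.
have [z Jz] : V `&` A !=set0 by apply: dA; [exists x|].
exact: (J0 z Jz).
Qed.

Theorem mainTheorem2 (X : topologicalType) (I : set (set X)) :
  is_ideal I -> semi_Alexandroff (X:=X) -> T_I_space I -> tau_boundary I ->
  resolvable (X:=X) -> I_resolvable I.
Proof.
move=> hI hSA hTI htb [_ [A [B [AB0 ABT dA dB]]]].
exists A, B; split => //; exact: dense_Idense.
Qed.
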